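(* Let $n=5$, $a=(1,1,1,1,1)$ and $p(x)=\sum_{i=1}^5(x_i^2-1)^2+\big(\sum_{i=1}^5 x_i\big)^2$ for $x\in\mathbb{R}^5$. Then there is no $\epsilon>0$ such that $p(x)-\epsilon$ is a sum of squares of polynomials; that is, the (infeasible) partition instance $\{1,1,1,1,1\}$ is not sos-refutable.
   Context: A partition instance $a_1,\ldots,a_n$ of positive integers is called sos-refutable if there exists $\epsilon>0$ such that $p_a(x)-\epsilon$ is a sum of squares of polynomials, where $p_a(x)=\sum_i(x_i^2-1)^2+(\sum_i a_ix_i)^2$. *)

(* Defs.v *)
From mathcomp Require Import all_boot all_algebra.
From mathcomp Require Import reals.
From mathcomp Require Import mpoly.
Set Implicit Arguments. Unset Strict Implicit. Unset Printing Implicit Defensive.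
Import GRing.Theory Num.Theory.
Local Open Scope ring_scope.

Definition is_sos (R : realType) (n : nat) (p : {mpoly R[n]}) : Prop :=
  exists s : seq {mpoly R[n]}, p = \sum_(q <- s) q ^+ 2.

Definition p_a (R : realType) (n : nat) (a : 'I_n -> nat) : {mpoly R[n]} :=
  \sum_(i < n) ('X_i ^+ 2 - 1) ^+ 2 + (\sum_(i < n) (a i)%:R *: 'X_i) ^+ 2.

Definition sos_refutable (R : realType) (n : nat) (a : 'I_n -> nat) : Prop :=
  exists eps : R, 0 < eps /\ is_sos (p_a R a - eps%:MP).

(* Main.v *)
Require Import Defs.
From mathcomp Require Import all_boot all_order all_algebra.
From mathcomp Require Import reals.
From mathcomp Require Import mpoly.
From mathcomp Require Import ring lra zify.
Set Implicit Arguments. Unset Strict Implicit. Unset Printing Implicit Defensive.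
Import Order.Theory GRing.Theory Num.Theory.
Local Open Scope ring_scope.

Section Deg.
Variable R : realType.
Variable n : nat.
Implicit Types p q : {mpoly R[n]}.

Lemma msizeM_le' p q : (msize (p * q) <= (msize p + msize q).-1)%N.
Proof.
case: (eqVneq p 0) => [->|p0]; first by rewrite mul0r msize0.
case: (eqVneq q 0) => [->|q0]; first by rewrite mulr0 msize0.
by rewrite msizeM.
Qed.

Lemma msize_pa (a : 'I_n -> nat) (eps : R) : (msize (p_a R a - eps%:MP) <= 5)%N.
Proof.
apply: leq_trans (msizeD_le _ _) _; rewrite msizeN geq_max; apply/andP; split; last first.
  by rewrite msizeC; case: (_ != 0).
apply: leq_trans (msizeD_le _ _) _; rewrite geq_max; apply/andP; split.
  apply: leq_trans (msize_sum _ _ _) _; apply/bigmax_leqP_seq => i _ _.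
  rewrite expr2; apply: leq_trans (msizeM_le' _ _) _.
  have h : (msize ('X_i ^+ 2 - 1 : {mpoly R[n]}) <= 3)%N.
    apply: leq_trans (msizeD_le _ _) _; rewrite msizeN msize1 geq_max andbT.
    rewrite expr2; apply: leq_trans (msizeM_le' _ _) _.
    by rewrite msizeX mdeg1.
  by move: h; case: (msize _) => [|[|[|[|k]]]].
rewrite expr2; apply: leq_trans (msizeM_le' _ _) _.
have h : (msize (\sum_(i < n) (a i)%:R *: 'X_i : {mpoly R[n]}) <= 2)%N.
  apply: leq_trans (msize_sum _ _ _) _; apply/bigmax_leqP_seq => i _ _.
  by apply: leq_trans (msizeZ_le _ _) _; rewrite msizeX mdeg1.
by move: h; case: (msize _) => [|[|[|k]]].
Qed.

Lemma ex_max (T : eqType) (s : seq T) (f : T -> 'X_{1..n}) x :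
  x \in s -> exists2 y, y \in s & forall z, z \in s -> (f z <= f y)%O.
Proof.
elim: s x => [//|y s IH] x _.
case: s IH => [|y1 s] IH.
  by exists y; rewrite ?inE ?eqxx // => z; rewrite inE => /eqP ->.
have [y' y's hy'] := IH y1 (mem_head _ _).
case: (leP (f y) (f y')) => h.
  exists y'; first by rewrite inE y's orbT.
  by move=> z; rewrite inE => /orP [/eqP ->|/hy'].
exists y; first by rewrite inE eqxx.
move=> z; rewrite inE => /orP [/eqP ->//|/hy' hz].
exact: le_trans hz (ltW h).
Qed.

Lemma deg_sos (s : seq {mpoly R[n]}) (P : {mpoly R[n]}) :
  (msize P <= 5)%N -> P = \sum_(q <- s) q ^+ 2 ->
  forall q, q \in s -> (msize q <= 3)%N.
Proof.
move=> hP hPs q qs.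
have [q' q's leM] := ex_max (@mlead n R) qs.
rewrite leqNgt; apply/negP => hq.
have q0 : q != 0 by apply: contraTneq hq => ->; rewrite msize0.
have dq : (3 <= mdeg (mlead q))%N by rewrite -ltnS mlead_deg.
have dM : (3 <= mdeg (mlead q'))%N := leq_trans dq (lemc_mdeg (leM q qs)).
have q'0 : q' != 0 by apply: contraTneq dM => h; rewrite h mlead0 mdeg0.
have hterm : forall z, z \in s -> 0 <= (z ^+ 2)@_(mlead q' *+ 2).
  move=> z zs; case: (eqVneq z 0) => [->|z0]; first by rewrite expr0n /= mcoeff0.
  move: (leM z zs); rewrite le_eqVlt => /orP [/eqP <-|lt].
    by rewrite mleadcX sqr_ge0.
  have E2 : forall m : 'X_{1..n}, (m *+ 2 = m + m)%MM by move=> m; rewrite mulmS mulm1n.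
  rewrite mcoeff_gt_mlead ?lexx // mleadX // !E2.
  exact: ltm_add.
have hpos : 0 < (q' ^+ 2)@_(mlead q' *+ 2).
  rewrite mleadcX lt_def sqr_ge0 andbT sqrf_eq0.
  by rewrite mleadc_eq0.
have hc : P@_(mlead q' *+ 2) != 0.
  rewrite hPs raddf_sum (big_rem q') //= gt_eqF //.
  apply: lt_le_trans hpos _; rewrite lerDl.
  rewrite big_seq_cond; apply: sumr_ge0 => z /andP [/mem_rem zs _]; exact: hterm.
have := msize_mdeg_lt (p := P) (m := (mlead q' *+ 2)%MM); rewrite mcoeff_msupp hc mdegMn.
move=> /(_ isT) h; have := leq_trans h hP; lia.
Qed.

End Deg.

Lemma pick3 (e0 e1 e2 e3 e4 : bool) (m0 m1 m2 m3 m4 : nat) :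
  (m0 + m1 + m2 + m3 + m4 <= 2)%N -> (3 <= e0 + e1 + e2 + e3 + e4)%N ->
  [|| e0 && (m0 == 0)%N, e1 && (m1 == 0)%N, e2 && (m2 == 0)%N, e3 && (m3 == 0)%N | e4 && (m4 == 0)%N].
Proof. case: e0 e1 e2 e3 e4 => [] [] [] [] [] //=; lia. Qed.

Definition io0 : 'I_5 := ord0.
Definition io1 : 'I_5 := lift ord0 ord0.
Definition io2 : 'I_5 := lift ord0 (lift ord0 ord0).
Definition io3 : 'I_5 := lift ord0 (lift ord0 (lift ord0 ord0)).
Definition io4 : 'I_5 := lift ord0 (lift ord0 (lift ord0 (lift ord0 ord0))).

Lemma sum5n (F : 'I_5 -> nat) : (\sum_(i < 5) F i = F io0 + F io1 + F io2 + F io3 + F io4)%N.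
Proof. by rewrite !big_ord_recl big_ord0 !addnA addn0. Qed.

Section Pts.
Variable R : realType.

Lemma prod5 (F : 'I_5 -> R) : \prod_(i < 5) F i = F io0 * F io1 * F io2 * F io3 * F io4.
Proof. by rewrite !big_ord_recl big_ord0 !mulrA mulr1. Qed.
Lemma sum5 (V : zmodType) (F : 'I_5 -> V) : \sum_(i < 5) F i = F io0 + F io1 + F io2 + F io3 + F io4.
Proof. by rewrite !big_ord_recl big_ord0 !addrA addr0. Qed.

Definition sg (b : bool) : R := if b then 1 else -1.
Definition pt (b0 b1 b2 b3 b4 : bool) : 'I_5 -> R :=
  fun i => sg (nth false [:: b0; b1; b2; b3; b4] i).
Definition ev (q : {mpoly R[5]}) b0 b1 b2 b3 b4 := q.@[pt b0 b1 b2 b3 b4].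

Lemma ev_pa eps b0 b1 b2 b3 b4 :
  ev (p_a R (fun _ : 'I_5 => 1%N) - eps%:MP) b0 b1 b2 b3 b4 =
  (sg b0 ^+ 2 - 1) ^+ 2 + (sg b1 ^+ 2 - 1) ^+ 2 + (sg b2 ^+ 2 - 1) ^+ 2 +
  (sg b3 ^+ 2 - 1) ^+ 2 + (sg b4 ^+ 2 - 1) ^+ 2 +
  (sg b0 + sg b1 + sg b2 + sg b3 + sg b4) ^+ 2 - eps.
Proof.
rewrite /ev /p_a !sum5 !expr2.
rewrite !(mevalB, mevalD, mevalM, meval1, mevalZ, mevalXU, mevalC) /pt /=.
ring.
Qed.
Definition S32 (F : bool -> bool -> bool -> bool -> bool -> R) : R :=
  \sum_(b0 : bool) \sum_(b1 : bool) \sum_(b2 : bool) \sum_(b3 : bool) \sum_(b4 : bool)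
    F b0 b1 b2 b3 b4.

Definition chi (e0 e1 e2 e3 e4 b0 b1 b2 b3 b4 : bool) : R :=
  (if ~~ b0 && e0 then -1 else 1) * (if ~~ b1 && e1 then -1 else 1) *
  (if ~~ b2 && e2 then -1 else 1) * (if ~~ b3 && e3 then -1 else 1) *
  (if ~~ b4 && e4 then -1 else 1).

Definition um (o : option bool) (b : bool) : R :=
  match o with None => sg b | Some c => if b then (if c then 1 else 0) else (if c then 0 else 1) end.

Definition wt (b0 b1 b2 b3 b4 : bool) : R :=
  match (~~ b0 + ~~ b1 + ~~ b2 + ~~ b3 + ~~ b4)%N with
  | 0 => 3 | 1 => -5 | 2 => 15 | 3 => 15 | 4 => -5 | _ => 3 end.


Lemma S32_ext F G : (forall b0 b1 b2 b3 b4, F b0 b1 b2 b3 b4 = G b0 b1 b2 b3 b4) -> S32 F = S32 G.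
Proof. by move=> H; rewrite /S32 !big_bool /= !H. Qed.

Lemma S32_add F G : S32 (fun b0 b1 b2 b3 b4 => F b0 b1 b2 b3 b4 + G b0 b1 b2 b3 b4) = S32 F + S32 G.
Proof. rewrite /S32 !big_bool /=; ring. Qed.

Lemma S32_sum (I : Type) (r : seq I) (G : I -> bool -> bool -> bool -> bool -> bool -> R) :
  S32 (fun b0 b1 b2 b3 b4 => \sum_(i <- r) G i b0 b1 b2 b3 b4) = \sum_(i <- r) S32 (G i).
Proof.
elim: r => [|i r IH].
  rewrite big_nil (S32_ext (G := fun _ _ _ _ _ => 0)); last by move=> *; rewrite big_nil.
  by rewrite /S32 !big_bool /= !addr0.
rewrite big_cons -IH -S32_add; apply: S32_ext => *; by rewrite big_cons.
Qed.

Definition Fo o0 o1 o2 o3 o4 (q : {mpoly R[5]}) :=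
  S32 (fun b0 b1 b2 b3 b4 => um o0 b0 * um o1 b1 * um o2 b2 * um o3 b3 * um o4 b4 * ev q b0 b1 b2 b3 b4).

Lemma Fo_add o0 o1 o2 o3 o4 q1 q2 :
  Fo o0 o1 o2 o3 o4 (q1 + q2) = Fo o0 o1 o2 o3 o4 q1 + Fo o0 o1 o2 o3 o4 q2.
Proof. rewrite /Fo -S32_add; apply: S32_ext => *; rewrite /ev mevalD mulrDr //. Qed.

Lemma Fo0 o0 o1 o2 o3 o4 : Fo o0 o1 o2 o3 o4 0 = 0.
Proof.
rewrite /Fo (S32_ext (G := fun _ _ _ _ _ => 0)); last by move=> *; rewrite /ev meval0 mulr0.
by rewrite /S32 !big_bool /= !addr0.
Qed.

Lemma FoZ o0 o1 o2 o3 o4 c q : Fo o0 o1 o2 o3 o4 (c *: q) = c * Fo o0 o1 o2 o3 o4 q.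
Proof. rewrite /Fo /ev /S32 !big_bool /= !mevalZ; ring. Qed.

Lemma Fo_X (o0 o1 o2 o3 o4 : option bool) (m : 'X_{1..5}) : (mdeg m <= 2)%N ->
  (3 <= (o0 == None) + (o1 == None) + (o2 == None) + (o3 == None) + (o4 == None))%N ->
  Fo o0 o1 o2 o3 o4 'X_[m] = 0.
Proof.
move=> hm he.
have fact : forall u0 u1 u2 u3 u4 : bool -> R,
  S32 (fun b0 b1 b2 b3 b4 => u0 b0 * u1 b1 * u2 b2 * u3 b3 * u4 b4) =
  (u0 true + u0 false) * (u1 true + u1 false) * (u2 true + u2 false) *
  (u3 true + u3 false) * (u4 true + u4 false).
  by move=> *; rewrite /S32 !big_bool /=; ring.
pose u (o : option bool) (k : nat) (b : bool) : R := um o b * sg b ^+ k.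
have E : forall b0 b1 b2 b3 b4,
  um o0 b0 * um o1 b1 * um o2 b2 * um o3 b3 * um o4 b4 * ev 'X_[m] b0 b1 b2 b3 b4 =
  u o0 (m io0) b0 * u o1 (m io1) b1 * u o2 (m io2) b2 * u o3 (m io3) b3 * u o4 (m io4) b4.
  move=> b0 b1 b2 b3 b4; rewrite /ev mevalX prod5 /u /pt /=; ring.
rewrite /Fo (S32_ext E) fact /u.
rewrite mdegE sum5n in hm.
case/orP: (pick3 hm he) => [|/orP [|/orP [|/orP []]]] /andP [/eqP -> /eqP ->];
  rewrite /um /sg /=; ring.
Qed.

Lemma Fo_rel (o0 o1 o2 o3 o4 : option bool) (q : {mpoly R[5]}) : (msize q <= 3)%N ->
  (3 <= (o0 == None) + (o1 == None) + (o2 == None) + (o3 == None) + (o4 == None))%N ->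
  Fo o0 o1 o2 o3 o4 q = 0.
Proof.
move=> hq he; rewrite (mpolyE q).
rewrite (big_morph (Fo o0 o1 o2 o3 o4) (Fo_add o0 o1 o2 o3 o4) (Fo0 o0 o1 o2 o3 o4)).
apply: big1_seq => m /andP [_ mq]; rewrite FoZ Fo_X ?mulr0 //.
by have := msize_mdeg_lt mq; move: hq; lia.
Qed.

Lemma pos32 (V : bool -> bool -> bool -> bool -> bool -> R) :
  (forall o0 o1 o2 o3 o4 : option bool,
     (3 <= (o0 == None) + (o1 == None) + (o2 == None) + (o3 == None) + (o4 == None))%N ->
     S32 (fun b0 b1 b2 b3 b4 => um o0 b0 * um o1 b1 * um o2 b2 * um o3 b3 * um o4 b4 * V b0 b1 b2 b3 b4) = 0) ->
  0 <= S32 (fun b0 b1 b2 b3 b4 => wt b0 b1 b2 b3 b4 * V b0 b1 b2 b3 b4 ^+ 2).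
Proof.
move=> H.
have h0 := H (Some true) (Some true) None None None isT; rewrite /S32 /um /sg !big_bool /= in h0.
have d0 : (V true true false false false) = ((V true true true true true) - (V true true true true false) - (V true true true false true) + (V true true true false false) - (V true true false true true) + (V true true false true false) + (V true true false false true)).
  by apply/eqP; rewrite -subr_eq0 -oppr_eq0 -h0; apply/eqP; ring.
have h1 := H (Some true) None (Some true) None None isT; rewrite /S32 /um /sg !big_bool /= in h1.
have d1 : (V true false true false false) = ((V true true true true true) - (V true true true true false) - (V true true true false true) + (V true true true false false) - (V true false true true true) + (V true false true true false) + (V true false true false true)).
  by apply/eqP; rewrite -subr_eq0 -oppr_eq0 -h1; apply/eqP; ring.
have h2 := H (Some true) None None (Some true) None isT; rewrite /S32 /um /sg !big_bool /= in h2.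
have d2 : (V true false false true false) = ((V true true true true true) - (V true true true true false) - (V true true false true true) + (V true true false true false) - (V true false true true true) + (V true false true true false) + (V true false false true true)).
  by apply/eqP; rewrite -subr_eq0 -oppr_eq0 -h2; apply/eqP; ring.
have h3 := H (Some true) None None None (Some true) isT; rewrite /S32 /um /sg !big_bool /= in h3.
have d3 : (V true false false false true) = ((V true true true true true) - (V true true true false true) - (V true true false true true) + (V true true false false true) - (V true false true true true) + (V true false true false true) + (V true false false true true)).
  by apply/eqP; rewrite -subr_eq0 -oppr_eq0 -h3; apply/eqP; ring.
have h4 := H None (Some true) (Some true) None None isT; rewrite /S32 /um /sg !big_bool /= in h4.
have d4 : (V false true true false false) = ((V true true true true true) - (V true true true true false) - (V true true true false true) + (V true true true false false) - (V false true true true true) + (V false true true true false) + (V false true true false true)).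
  by apply/eqP; rewrite -subr_eq0 -oppr_eq0 -h4; apply/eqP; ring.
have h5 := H None (Some true) None (Some true) None isT; rewrite /S32 /um /sg !big_bool /= in h5.
have d5 : (V false true false true false) = ((V true true true true true) - (V true true true true false) - (V true true false true true) + (V true true false true false) - (V false true true true true) + (V false true true true false) + (V false true false true true)).
  by apply/eqP; rewrite -subr_eq0 -oppr_eq0 -h5; apply/eqP; ring.
have h6 := H None (Some true) None None (Some true) isT; rewrite /S32 /um /sg !big_bool /= in h6.
have d6 : (V false true false false true) = ((V true true true true true) - (V true true true false true) - (V true true false true true) + (V true true false false true) - (V false true true true true) + (V false true true false true) + (V false true false true true)).
  by apply/eqP; rewrite -subr_eq0 -oppr_eq0 -h6; apply/eqP; ring.
have h7 := H None None (Some true) (Some true) None isT; rewrite /S32 /um /sg !big_bool /= in h7.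
have d7 : (V false false true true false) = ((V true true true true true) - (V true true true true false) - (V true false true true true) + (V true false true true false) - (V false true true true true) + (V false true true true false) + (V false false true true true)).
  by apply/eqP; rewrite -subr_eq0 -oppr_eq0 -h7; apply/eqP; ring.
have h8 := H None None (Some true) None (Some true) isT; rewrite /S32 /um /sg !big_bool /= in h8.
have d8 : (V false false true false true) = ((V true true true true true) - (V true true true false true) - (V true false true true true) + (V true false true false true) - (V false true true true true) + (V false true true false true) + (V false false true true true)).
  by apply/eqP; rewrite -subr_eq0 -oppr_eq0 -h8; apply/eqP; ring.
have h9 := H None None None (Some true) (Some true) isT; rewrite /S32 /um /sg !big_bool /= in h9.
have d9 : (V false false false true true) = ((V true true true true true) - (V true true false true true) - (V true false true true true) + (V true false false true true) - (V false true true true true) + (V false true false true true) + (V false false true true true)).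
  by apply/eqP; rewrite -subr_eq0 -oppr_eq0 -h9; apply/eqP; ring.
have h10 := H (Some true) None None None (Some false) isT; rewrite /S32 /um /sg !big_bool /= in h10.
have d10 : (V true false false false false) = ((V true true true true false) - (V true true true false false) - (V true true false true false) + (V true true false false false) - (V true false true true false) + (V true false true false false) + (V true false false true false)).
  by apply/eqP; rewrite -subr_eq0 -oppr_eq0 -h10; apply/eqP; ring.
have h11 := H None (Some true) None None (Some false) isT; rewrite /S32 /um /sg !big_bool /= in h11.
have d11 : (V false true false false false) = ((V true true true true false) - (V true true true false false) - (V true true false true false) + (V true true false false false) - (V false true true true false) + (V false true true false false) + (V false true false true false)).
  by apply/eqP; rewrite -subr_eq0 -oppr_eq0 -h11; apply/eqP; ring.
have h12 := H None None (Some true) None (Some false) isT; rewrite /S32 /um /sg !big_bool /= in h12.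
have d12 : (V false false true false false) = ((V true true true true false) - (V true true true false false) - (V true false true true false) + (V true false true false false) - (V false true true true false) + (V false true true false false) + (V false false true true false)).
  by apply/eqP; rewrite -subr_eq0 -oppr_eq0 -h12; apply/eqP; ring.
have h13 := H None None None (Some true) (Some false) isT; rewrite /S32 /um /sg !big_bool /= in h13.
have d13 : (V false false false true false) = ((V true true true true false) - (V true true false true false) - (V true false true true false) + (V true false false true false) - (V false true true true false) + (V false true false true false) + (V false false true true false)).
  by apply/eqP; rewrite -subr_eq0 -oppr_eq0 -h13; apply/eqP; ring.
have h14 := H None None None (Some false) (Some true) isT; rewrite /S32 /um /sg !big_bool /= in h14.
have d14 : (V false false false false true) = ((V true true true false true) - (V true true false false true) - (V true false true false true) + (V true false false false true) - (V false true true false true) + (V false true false false true) + (V false false true false true)).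
  by apply/eqP; rewrite -subr_eq0 -oppr_eq0 -h14; apply/eqP; ring.
have h15 := H None None None (Some false) (Some false) isT; rewrite /S32 /um /sg !big_bool /= in h15.
have d15 : (V false false false false false) = ((V true true true false false) - (V true true false false false) - (V true false true false false) + (V true false false false false) - (V false true true false false) + (V false true false false false) + (V false false true false false)).
  by apply/eqP; rewrite -subr_eq0 -oppr_eq0 -h15; apply/eqP; ring.
rewrite /S32 /wt !big_bool /=.
rewrite d15 d10 d11 d12 d13 d14 d0 d1 d2 d3 d4 d5 d6 d7 d8 d9.
match goal with |- is_true (_ <= ?Q) =>
  (have E : 6 * Q = 6 * (6 * (V true true true true true) - 4 * (V true true true true false) - 4 * (V true true true false true) + 3 * (V true true true false false) - 4 * (V true true false true true) + 3 * (V true true false true false) + 3 * (V true true false false true) - 4 * (V true false true true true) + 3 * (V true false true true false) + 3 * (V true false true false true) + 3 * (V true false false true true) - 4 * (V false true true true true) + 3 * (V false true true true false) + 3 * (V false true true false true) + 3 * (V false true false true true) + 3 * (V false false true true true)) ^+ 2 + 6 * (4 * (V true true true true false) - (V true true true false true) - 3 * (V true true true false false) - (V true true false true true) - 3 * (V true true false true false) + 2 * (V true true false false true) - (V true false true true true) - 3 * (V true false true true false) + 2 * (V true false true false true) + 2 * (V true false false true true) - (V false true true true true) - 3 * (V false true true true false) + 2 * (V false true true false true) + 2 * (V false true false true true) + 2 * (V false false true true true)) ^+ 2 + 10 * (3 * (V true true true false true) - 3 * (V true true true false false) - (V true true false true true) + (V true true false true false) - 2 * (V true true false false true) - (V true false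 true true true) + (V true false true true false) - 2 * (V true false true false true) + 2 * (V true false false true true) - (V false true true true true) + (V false true true true false) - 2 * (V false true true false true) + 2 * (V false true false true true) + 2 * (V false false true true true)) ^+ 2 + 10 * (3 * (V true true true false false) - (V true true false true false) - (V true true false false true) - (V true false true true false) - (V true false true false true) + (V true false false true true) - (V false true true true false) - (V false true true false true) + (V false true false true true) + (V false false true true true)) ^+ 2 + 20 * (2 * (V true true false true true) - 2 * (V true true false true false) - 2 * (V true true false false true) - (V true false true true true) + (V true false true true false) + (V true false true false true) - (V true false false true true) - (V false true true true true) + (V false true true true false) + (V false true true false true) - (V false true false true true) + 2 * (V false false true true true)) ^+ 2 + 5 * (4 * (V true true false true false) - 2 * (V true true false false true) - 2 * (V true false true true false) + (V true false true false true) - (V true false false true true) - 2 * (V false true true true false) + (V false true true false true) - (V false true false true true) + 2 * (V false false true true true)) ^+ 2 + 15 * (2 * (V true true false false true) - (V true false true false true) - (V true false false true true) - (V false true true false true) - (V false true false true true) + 2 * (V false false true true true)) ^+ 2 + 60 * ((V true false true true true) - (V true false true true false) - (V true false true false true) - (V true false false true true) - (V false true true true true) + (V false true true true false) + (V false true true false true) + (V false true false true true)) ^+ 2 + 15 * (2 * (V true false true true false) - (V true false true false true) - (V true false false true true) - 2 * (V false true true true false) + (V false true true false true) + (V false true false true true)) ^+ 2 + 45 * ((V true false true false true) - (V true false false true true) - (V false true true false true) + (V false true false true true)) ^+ 2 by ring);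
  (suff H0 : 0 <= 6 * Q by move: H0; rewrite pmulr_rge0 // ltr0n);
  rewrite E; repeat apply: addr_ge0; (apply: mulr_ge0; [exact: ler0n | exact: sqr_ge0])
end.
Qed.

Lemma main_aux : ~ sos_refutable R (fun _ : 'I_5 => 1%N).
Proof.
move=> [eps [eps0 [s hs]]].
have hsz := deg_sos (msize_pa (fun _ : 'I_5 => 1%N) eps) hs.
have key : forall b0 b1 b2 b3 b4,
  wt b0 b1 b2 b3 b4 * ev (p_a R (fun _ : 'I_5 => 1%N) - eps%:MP) b0 b1 b2 b3 b4 =
  \sum_(q <- s) wt b0 b1 b2 b3 b4 * ev q b0 b1 b2 b3 b4 ^+ 2.
  move=> b0 b1 b2 b3 b4; rewrite hs /ev.
  rewrite (big_morph (meval (pt b0 b1 b2 b3 b4)) (mevalD _) (meval0 _)) mulr_sumr.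
  by apply: eq_bigr => q _; rewrite !expr2 mevalM.
have L1 : S32 (fun b0 b1 b2 b3 b4 =>
    wt b0 b1 b2 b3 b4 * ev (p_a R (fun _ : 'I_5 => 1%N) - eps%:MP) b0 b1 b2 b3 b4) = - 256 * eps.
  rewrite /S32 !big_bool /= !ev_pa /wt /sg /=; ring.
have L2 : 0 <= S32 (fun b0 b1 b2 b3 b4 =>
    wt b0 b1 b2 b3 b4 * ev (p_a R (fun _ : 'I_5 => 1%N) - eps%:MP) b0 b1 b2 b3 b4).
  rewrite (S32_ext key) S32_sum big_seq_cond; apply: sumr_ge0 => q /andP [qs _].
  apply: pos32 => o0 o1 o2 o3 o4 ho; exact: (Fo_rel (hsz q qs) ho).
move: L2; rewrite L1; lra.
Qed.

End Pts.

Theorem proposition5p5 (R : realType) :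
  ~ sos_refutable R (fun _ : 'I_5 => 1%N).
Proof. exact: main_aux. Qed.
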